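(* Let $X=[a,b]\subseteq\mathbb{R}$ with $a<b$ and let $\mathcal{U}$ be the set of all continuous preferences on $[a,b]$ with a unique top. (i) A median voter scheme $f^\alpha:\mathcal{U}^n\to[a,b]$ with fixed ballots $\alpha_1\le\dots\le\alpha_{n-1}$ in $[a,b]$ is NOM if and only if $\alpha_1=a$ and $\alpha_{n-1}=b$. (ii) A non-dictatorial generalized median voter scheme $f^p:\mathcal{U}^n\to[a,b]$ is NOM if and only if $p_{N\setminus\{i\}}=a$ and $p_{\{i\}}=b$ for each $i\in N$.
   Context: $N=\{1,\dots,n\}$, $n\ge2$. A preference in $\mathcal{U}$ is a continuous complete and transitive binary relation $R_i$ on $[a,b]$ (indifferences between non-top alternatives allowed) with a unique best element $t(R_i)$; $P_i$ denotes its strict part. Median voter scheme: $f^\alpha(R)=\mathrm{med}\{t(R_1),\dots,t(R_n),\alpha_1,\dots,\alpha_{n-1}\}$. A monotonic family of fixed ballots is $p=\{p_S\}_{S\subseteq N}$ with $p_S\in[a,b]$, $p_N=a$, $p_\emptyset=b$, and $p_Q\le p_T$ whenever $T\subseteq Q$; the generalized median voter scheme is $f^p(R)=\min_{S\subseteq N}\max_{j\in S}\{t(R_j),p_S\}$. A rule is dictatorial if there is $i$ with $f(R)=t(R_i)$ for all $R$. Option set $O(R_i)=\{f(R_i,R_{-i}):R_{-i}\in\mathcal{U}^{n-1}\}$ (for these rules a closed interval). For a nonempty compact $Y$, let $B(R_i,Y)$ and $W(R_i,Y)$ denote an $R_i$-best and an $R_i$-worst element of $Y$. $R_i'$ is a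 manipulation at $R_i$ if $f(R_i',R_{-i})\,P_i\,f(R_i,R_{-i})$ for some $R_{-i}$; it is obvious if $W(R_i,O(R_i'))\,P_i\,W(R_i,O(R_i))$ or $B(R_i,O(R_i'))\,P_i\,B(R_i,O(R_i))$. The rule is NOM if it admits no obvious manipulation. *)

(* Defs.v *)
From HB Require Import structures.
From mathcomp Require Import all_boot all_order all_algebra.
From mathcomp Require Import all_classical all_reals topology normedtype.
Set Implicit Arguments. Unset Strict Implicit. Unset Printing Implicit Defensive.
Import Order.TTheory GRing.Theory Num.Theory.
Import numFieldNormedType.Exports.
Local Open Scope classical_set_scope.
Local Open Scope ring_scope.

Section Voting.
Variable R : realType.
Variables a b : R.

Definition inX (x : R) : Prop := a <= x <= b.

(* a (weak) preference relation on [a,b]: Ri x y means "x is at least as good as y" *)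
Definition relation := R -> R -> Prop.

Definition strict (Ri : relation) (x y : R) : Prop := Ri x y /\ ~ Ri y x.

Definition is_best (Ri : relation) (t : R) : Prop :=
  inX t /\ forall y, inX y -> Ri t y.

Definition in_U (Ri : relation) : Prop :=
  (forall x y, inX x -> inX y -> Ri x y \/ Ri y x) /\
  (forall x y z, inX x -> inX y -> inX z -> Ri x y -> Ri y z -> Ri x z) /\
  (forall x, inX x ->
     closed [set y | inX y /\ Ri y x] /\ closed [set y | inX y /\ Ri x y]) /\
  (exists t, is_best Ri t /\ forall t', is_best Ri t' -> t' = t).

Definition top (Ri : relation) : R := xget a [set t | is_best Ri t].

Variable n : nat.
Definition profile := 'I_n -> relation.
Definition in_Un (P : profile) : Prop := forall i, in_U (P i).
Definition rule := profile -> R.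

Definition upd (P : profile) (i : 'I_n) (Ri : relation) : profile :=
  fun j => if j == i then Ri else P j.

Definition option_set (f : rule) (i : 'I_n) (Ri : relation) : set R :=
  [set x | exists P : profile, in_Un P /\ x = f (upd P i Ri)].

Definition is_worst (Ri : relation) (Y : set R) (w : R) : Prop :=
  Y w /\ forall y, Y y -> Ri y w.
Definition is_bestin (Ri : relation) (Y : set R) (w : R) : Prop :=
  Y w /\ forall y, Y y -> Ri w y.

Definition manipulation (f : rule) (i : 'I_n) (Ri Ri' : relation) : Prop :=
  exists P : profile, in_Un P /\ strict Ri (f (upd P i Ri')) (f (upd P i Ri)).

Definition obvious (f : rule) (i : 'I_n) (Ri Ri' : relation) : Prop :=
  (exists w' w, is_worst Ri (option_set f i Ri') w' /\
                is_worst Ri (option_set f i Ri) w /\ strict Ri w' w) \/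
  (exists w' w, is_bestin Ri (option_set f i Ri') w' /\
                is_bestin Ri (option_set f i Ri) w /\ strict Ri w' w).

Definition obvious_manipulation (f : rule) (i : 'I_n) (Ri Ri' : relation) :=
  manipulation f i Ri Ri' /\ obvious f i Ri Ri'.

Definition NOM (f : rule) : Prop :=
  forall i Ri Ri', in_U Ri -> in_U Ri' -> ~ obvious_manipulation f i Ri Ri'.

Definition dictatorial (f : rule) : Prop :=
  exists i : 'I_n, forall P : profile, in_Un P -> f P = top (P i).

Definition med (s : seq R) : R := nth 0 (sort <=%R s) (size s)./2.

Definition median_voter_scheme (alpha : nat -> R) : rule :=
  fun P => med ([seq top (P i) | i <- enum 'I_n] ++
                [seq alpha k | k <- iota 1 n.-1]).

Definition monotonic_family (p : {set 'I_n} -> R) : Prop :=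
  (forall S, inX (p S)) /\ p (finset.setTfor 'I_n) = a /\ p (finset.set0 : {set 'I_n}) = b /\
  (forall Q T : {set 'I_n}, T \subset Q -> p Q <= p T).

(* f^p(R) = min_{S ⊆ N} max_{j ∈ S} {t(R_j), p_S}; the seed b of the outer min
   is harmless since the S = ∅ term equals p_∅ = b. *)
Definition gen_median_voter_scheme (p : {set 'I_n} -> R) : rule :=
  fun P => \big[Num.min/b]_(S : {set 'I_n})
             \big[Num.max/p S]_(j in S) top (P j).

End Voting.

(* Main.v *)
Require Import Defs.
From HB Require Import structures.
From mathcomp Require Import all_boot all_order all_algebra.
From mathcomp Require Import all_classical all_reals topology normedtype.
From mathcomp Require Import lra zify.
Import Order.TTheory GRing.Theory Num.Theory.
Import numFieldNormedType.Exports.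
Set Implicit Arguments. Unset Strict Implicit. Unset Printing Implicit Defensive.
Local Open Scope ring_scope.
Local Open Scope classical_set_scope.

Ltac mmsplit := repeat match goal with
  | |- context [Num.min ?x ?y] => rewrite (minEle x y); case: (leP x y) => ? /=
  | |- context [Num.max ?x ?y] => rewrite (maxEle x y); case: (leP x y) => ? /=
  end.

Lemma minP (R : realType) (x y : R) : Num.min x y <= x /\ Num.min x y <= y /\ (Num.min x y = x \/ Num.min x y = y).
Proof. rewrite minEle; case: (leP x y) => h /=; lra. Qed.
Lemma maxP (R : realType) (x y : R) : x <= Num.max x y /\ y <= Num.max x y /\ (Num.max x y = x \/ Num.max x y = y).
Proof. rewrite maxEle; case: (leP x y) => h /=; lra. Qed.

Ltac mmgen := repeat match goal with
 | |- context [Num.min ?x ?y] => move: (minP x y); move: (Num.min x y) => ?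
 | |- context [Num.max ?x ?y] => move: (maxP x y); move: (Num.max x y) => ?
end; intros; lra.

Section Pref.
Variables (R : realType) (a b : R).

Lemma cA (e : R) : continuous (fun y : R => y - e).
Proof. move=> x; apply: cvgB; [exact: cvg_id | exact: cvg_cst]. Qed.
Lemma cB (e : R) : continuous (fun y : R => e - y).
Proof. move=> x; apply: cvgB; [exact: cvg_cst | exact: cvg_id]. Qed.
Lemma cC (e : R) : continuous (fun y : R => e).
Proof. move=> x; exact: cvg_cst. Qed.
Lemma cMin {f g : R -> R} : continuous f -> continuous g -> continuous (fun y => Num.min (f y) (g y)).
Proof. move=> hf hg x; have := @continuous_min R R f g x (hf x) (hg x); exact. Qed.
Lemma cMax {f g : R -> R} : continuous f -> continuous g -> continuous (fun y => Num.max (f y) (g y)).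
Proof. move=> hf hg x; have := @continuous_max R R f g x (hf x) (hg x); exact. Qed.

Lemma clo (d : R -> R) (k : R) : continuous d ->
  closed [set y | (a <= y <= b) /\ d y <= k].
Proof.
move=> cd.
have -> : [set y | (a <= y <= b) /\ d y <= k] = [set y | a <= y] `&` [set y | y <= b] `&` (d @^-1` [set z | z <= k]).
  by apply/seteqP; split => y /=; [move=> [/andP[-> ->] ->] | move=> [[-> ->] ->]].
apply: closedI; first apply: closedI.
- exact: closed_ge.
- exact: closed_le.
- apply: preimage_closed; last exact: closed_le.
  by move=> y _; apply: cd.
Qed.

Lemma clo2 (d : R -> R) (k : R) : continuous d ->
  closed [set y | (a <= y <= b) /\ k <= d y].
Proof.
move=> cd.
have -> : [set y | (a <= y <= b) /\ k <= d y] = [set y | a <= y] `&` [set y | y <= b] `&` (d @^-1` [set z | k <= z]).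
  by apply/seteqP; split => y /=; [move=> [/andP[-> ->] ->] | move=> [[-> ->] ->]].
apply: closedI; first apply: closedI.
- exact: closed_ge.
- exact: closed_le.
- apply: preimage_closed; last exact: closed_ge.
  by move=> y _; apply: cd.
Qed.

Definition prefd (d : R -> R) : relation R := fun x y => d x <= d y.

Lemma prefd_U (d : R -> R) t : continuous d -> inX a b t ->
  (forall y, inX a b y -> y <> t -> d t < d y) ->
  in_U a b (prefd d) /\ top a b (prefd d) = t.
Proof.
move=> cd Xt dt.
have bt : is_best a b (prefd d) t.
  split=> // y Xy; rewrite /prefd.
  have [->|ne] := eqVneq y t; first by [].
  by apply/ltW/dt => //; apply/eqP.
have ut : forall t', is_best a b (prefd d) t' -> t' = t.
  move=> t' [Xt' bt']; case: (eqVneq t' t) => // ne.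
  have ne' : t' <> t by apply/eqP.
  have h1 := dt _ Xt' ne'; have h2 := bt' t Xt; rewrite /prefd in h2.
  by have := lt_le_trans h1 h2; rewrite ltxx.
split; last by rewrite /top; apply: xget_unique.
split.
  move=> x y _ _; rewrite /prefd.
  by case/orP: (le_total (d x) (d y)); [left|right].
split.
  by move=> x y z _ _ _; rewrite /prefd; apply: le_trans.
split; last by exists t.
by move=> x _; split; [exact: clo | exact: clo2].
Qed.

Definition dist (x0 : R) : relation R := prefd (fun y => Num.max (y - x0) (x0 - y)).

Lemma dist_U x0 : inX a b x0 -> in_U a b (dist x0) /\ top a b (dist x0) = x0.
Proof.
move=> X0; apply: (@prefd_U (fun y => Num.max (y - x0) (x0 - y))) => //.
  exact: (cMax (@cA x0) (@cB x0)).

move=> y _ ne; rewrite subrr.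
have : y != x0 by apply/eqP.
case: (ltgtP y x0) => // h _; mmsplit; lra.
Qed.

End Pref.

Section Abstract.
Variables (R : realType) (a b : R) (n : nat).
Hypothesis ab : a < b.
Variable F : ('I_n -> R) -> R.
Variables L H : 'I_n -> R.
Hypothesis LHr : forall i, (a <= L i <= b) /\ (a <= H i <= b).
Hypothesis LB1 : forall i x (t : 'I_n -> R), x <= H i -> (forall j, j != i -> x <= t j) -> x <= F t.
Hypothesis LB2 : forall x (t : 'I_n -> R), x <= b -> (forall j, x <= t j) -> x <= F t.
Hypothesis LB3 : forall i x (t : 'I_n -> R), x <= L i -> x <= t i -> x <= F t.
Hypothesis UB1 : forall x (t : 'I_n -> R), a <= x -> (forall j, t j <= x) -> F t <= x.
Hypothesis UB2 : forall i x (t : 'I_n -> R), L i <= x -> (forall j, j != i -> t j <= x) -> F t <= x.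
Hypothesis UB3 : forall i x (t : 'I_n -> R), H i <= x -> t i <= x -> F t <= x.

Definition fF : rule R n := fun P => F (fun j => top a b (P j)).

Lemma topP Ri : in_U a b Ri -> is_best a b Ri (top a b Ri).
Proof. case=> _ [_ [_ [t [bt _]]]]; apply: xgetPex; by exists t. Qed.

Lemma top_in Ri : in_U a b Ri -> inX a b (top a b Ri).
Proof. by move/topP => []. Qed.

Lemma upd_in (P : profile R n) (i : 'I_n) Q : in_Un a b P -> in_U a b Q -> in_Un a b (upd P i Q).
Proof. by move=> hP hQ j; rewrite /upd; case: (j == i). Qed.

Lemma F_in (t : 'I_n -> R) : (forall j, inX a b (t j)) -> inX a b (F t).
Proof.
move=> ht; apply/andP; split.
  apply: LB2; first exact: ltW.
  by move=> j; case/andP: (ht j).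
apply: UB1; first exact: ltW.
by move=> j; case/andP: (ht j).
Qed.

Lemma fF_in (P : profile R n) : in_Un a b P -> inX a b (fF P).
Proof. by move=> hP; apply: F_in => j; apply: top_in. Qed.

Definition cP (x : R) : profile R n := fun _ => dist x.

Lemma cP_in x : inX a b x -> @in_Un R a b n (cP x).
Proof. by move=> Xx j; case: (dist_U Xx). Qed.

Lemma top_upd (P : profile R n) (i j : 'I_n) Q : top a b (upd P i Q j) = if j == i then top a b Q else top a b (P j).
Proof. by rewrite /upd; case: (j == i). Qed.

Lemma top_cP x (i j : 'I_n) Q : inX a b x ->
  top a b (upd (cP x) i Q j) = if j == i then top a b Q else x.
Proof. by move=> Xx; rewrite top_upd; case: (j == i) => //; case: (dist_U Xx). Qed.

Lemma top_cPi x (i : 'I_n) Q : inX a b x -> top a b (upd (cP x) i Q i) = top a b Q.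
Proof. by move=> Xx; rewrite top_cP // eqxx. Qed.

Lemma top_cPj x (i j : 'I_n) Q : inX a b x -> j != i -> top a b (upd (cP x) i Q j) = x.
Proof. by move=> Xx ji; rewrite top_cP // (negbTE ji). Qed.

Lemma easy : (forall i, L i = a /\ H i = b) -> NOM a b fF.
Proof.
move=> hLH i Ri Ri' URi URi' [_ hob].
have O_eq : forall Q, in_U a b Q -> option_set a b fF i Q = [set y | inX a b y].
  move=> Q UQ; apply/seteqP; split => y /=.
  - move=> [P [UP ->]]; exact: fF_in (upd_in i UP UQ).
  - move=> Xy; exists (cP y); split; first exact: cP_in.
    have [ay yb] := andP Xy.
    apply/eqP; rewrite eq_le; apply/andP; split; rewrite /fF.
    + apply: (LB1 (i:=i)); first by rewrite (hLH i).2.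
      by move=> j ji; rewrite top_cPj.
    + apply: (UB2 (i:=i)); first by rewrite (hLH i).1.
      by move=> j ji; rewrite top_cPj.
case: hob => [[w' [w [[Ow' hw'] [[Ow hw] [_ nw]]]]] | [w' [w [[Ow' hw'] [[Ow hw] [_ nw]]]]]].
- apply: nw; apply: hw'.
  by rewrite (O_eq _ URi'); rewrite (O_eq _ URi) in Ow.
- apply: nw; apply: hw.
  by rewrite (O_eq _ URi); rewrite (O_eq _ URi') in Ow'.
Qed.


Lemma hard : NOM a b fF -> forall i, (L i = a /\ H i = b) \/ (L i = b /\ H i = a).
Proof.
move=> nom i.
have [/andP [aL Lb] /andP [aH Hb]] := LHr i.
case: (ltP a (Num.min (L i) (H i))) => hm.
{ exfalso.
  have [mL [mH _]] := minP (L i) (H i).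
  move: (Num.min (L i) (H i)) hm mL mH => m hm mL mH.
  have mb : m <= b by apply: le_trans Hb.
  pose c := (a + m) / 2. have cE : c = (a + m) / 2 by [].
  pose k := (m - a) / 4. have kE : k = (m - a) / 4 by [].
  have ac : a < c by rewrite cE; lra.
  have cm : c < m by rewrite cE; lra.
  have Xc : inX a b c by apply/andP; split; lra.
  have Xm : inX a b m by apply/andP; split; lra.
  pose d := fun y => Num.min (y - a) (Num.max k (m - y)).
  have dk : forall y, m <= y -> d y = k by move=> y my; rewrite /d /=; mmgen.
  have dc : d c = (m - a) / 2 by rewrite /d /=; mmgen.
  have dle : forall y, d y <= (m - a) / 2 by move=> y; rewrite /d /=; mmgen.
  have [URi tRi] : in_U a b (prefd d) /\ top a b (prefd d) = a.
    apply: prefd_U.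
    - exact: (cMin (@cA R a) (cMax (@cC R k) (@cB R m))).
    - by apply/andP; split; lra.
    - move=> y /andP [ay yb] ya.
      have ay' : a < y by rewrite lt_neqAle ay andbT; apply/eqP => h; apply: ya.
      rewrite /d /=; mmgen.
  have [URi' tRi'] := dist_U Xm.
  have v0 : fF (upd (cP c) i (prefd d)) = c.
    apply/eqP; rewrite eq_le; apply/andP; split; rewrite /fF.
    - apply: UB1; first lra.
      by move=> j; rewrite top_cP //; case: (j == i) => /=; rewrite ?tRi; lra.
    - apply: (LB1 (i := i)); first lra.
      by move=> j ji; rewrite top_cPj.
  have v1 : forall P, in_Un a b P -> m <= fF (upd P i (dist m)) /\ fF (upd P i (dist m)) <= b.
    move=> P UP; split; last by case/andP: (fF_in (upd_in i UP URi')).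
    by rewrite /fF; apply: (LB3 (i := i)) => //; rewrite top_upd eqxx tRi'.
  apply: (nom i (prefd d) (dist m) URi URi'); split.
  - exists (cP c); split; first exact: cP_in.
    rewrite v0; have [h1 h2] := v1 _ (cP_in Xc).
    rewrite /strict /prefd (dk _ h1) dc; split; lra.
  - left; exists m, c; split; [split | split; [split | ]].
    + exists (cP m); split; first exact: cP_in.
      apply/esym/eqP; rewrite eq_le; apply/andP; split; rewrite /fF.
      * apply: UB1; first lra.
        by move=> j; rewrite top_cP //; case: (j == i) => /=; rewrite ?tRi'; lra.
      * apply: (LB1 (i := i)); first lra.
        by move=> j ji; rewrite top_cPj.
    + move=> y [P [UP ->]]; have [h1 _] := v1 _ UP.
      by rewrite /prefd (dk _ h1) (dk m (lexx m)).
    + by exists (cP c); split; [exact: cP_in | rewrite v0].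
    + by move=> y [P [UP ->]]; rewrite /prefd dc; apply: dle.
    + rewrite /strict /prefd (dk m (lexx m)) dc; split; lra. }
case: (ltP (Num.max (L i) (H i)) b) => hM.
{ exfalso.
  have [mL [mH _]] := maxP (L i) (H i).
  move: (Num.max (L i) (H i)) hM mL mH => m hm2 mL mH.
  have am : a <= m by apply: le_trans mH.
  pose c := (m + b) / 2. have cE : c = (m + b) / 2 by [].
  pose k := (b - m) / 4. have kE : k = (b - m) / 4 by [].
  have cb : c < b by rewrite cE; lra.
  have mc : m < c by rewrite cE; lra.
  have Xc : inX a b c by apply/andP; split; lra.
  have Xm : inX a b m by apply/andP; split; lra.
  pose d := fun y => Num.min (b - y) (Num.max k (y - m)).
  have dk : forall y, y <= m -> d y = k by move=> y my; rewrite /d /=; mmgen.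
  have dc : d c = (b - m) / 2 by rewrite /d /=; mmgen.
  have dle : forall y, d y <= (b - m) / 2 by move=> y; rewrite /d /=; mmgen.
  have [URi tRi] : in_U a b (prefd d) /\ top a b (prefd d) = b.
    apply: prefd_U.
    - exact: (cMin (@cB R b) (cMax (@cC R k) (@cA R m))).
    - by apply/andP; split; lra.
    - move=> y /andP [ay yb] ya.
      have ay' : y < b by rewrite lt_neqAle yb andbT; apply/eqP => h; apply: ya.
      rewrite /d /=; mmgen.
  have [URi' tRi'] := dist_U Xm.
  have v0 : fF (upd (cP c) i (prefd d)) = c.
    apply/eqP; rewrite eq_le; apply/andP; split; rewrite /fF.
    - apply: (UB2 (i := i)); first lra.
      by move=> j ji; rewrite top_cPj.
    - apply: LB2; first lra.
      by move=> j; rewrite top_cP //; case: (j == i) => /=; rewrite ?tRi; lra.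
  have v1 : forall P, in_Un a b P -> a <= fF (upd P i (dist m)) /\ fF (upd P i (dist m)) <= m.
    move=> P UP; split; first by case/andP: (fF_in (upd_in i UP URi')).
    by rewrite /fF; apply: (UB3 (i := i)) => //; rewrite top_upd eqxx tRi'.
  apply: (nom i (prefd d) (dist m) URi URi'); split.
  - exists (cP c); split; first exact: cP_in.
    rewrite v0; have [h1 h2] := v1 _ (cP_in Xc).
    rewrite /strict /prefd (dk _ h2) dc; split; lra.
  - left; exists m, c; split; [split | split; [split | ]].
    + exists (cP m); split; first exact: cP_in.
      apply/esym/eqP; rewrite eq_le; apply/andP; split; rewrite /fF.
      * apply: (UB2 (i := i)); first lra.
        by move=> j ji; rewrite top_cPj.
      * apply: LB2; first lra.
        by move=> j; rewrite top_cP //; case: (j == i) => /=; rewrite ?tRi'; lra.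
    + move=> y [P [UP ->]]; have [_ h2] := v1 _ UP.
      by rewrite /prefd (dk _ h2) (dk m (lexx m)).
    + by exists (cP c); split; [exact: cP_in | rewrite v0].
    + by move=> y [P [UP ->]]; rewrite /prefd dc; apply: dle.
    + rewrite /strict /prefd (dk m (lexx m)) dc; split; lra. }
rewrite ge_min in hm; rewrite le_max in hM.
by case/orP: hm => hm; case/orP: hM => hM; lra.
Qed.

Lemma dict_of i : L i = b -> H i = a -> dictatorial a b fF.
Proof.
move=> hL hH; exists i => P UP; rewrite /fF; apply/eqP; rewrite eq_le; apply/andP; split.
- apply: (UB3 (i := i)); last exact: lexx.
  by rewrite hH; case/andP: (top_in (UP i)).
- apply: (LB3 (i := i)); last exact: lexx.
  by rewrite hL; case/andP: (top_in (UP i)).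
Qed.

End Abstract.

Lemma bigmax_ge_seq (R : realType) (I : eqType) (r : seq I) (P : pred I) (F : I -> R) x0 j :
  j \in r -> P j -> F j <= \big[Num.max/x0]_(i <- r | P i) F i.
Proof.
elim: r => // k r IH; rewrite in_cons big_cons => /orP [/eqP <-|jr] Pj.
  by rewrite Pj le_max lexx.
case: (P k); last exact: IH.
by rewrite le_max (IH jr Pj) orbT.
Qed.

Lemma bigmin_le_seq (R : realType) (I : eqType) (r : seq I) (P : pred I) (F : I -> R) x0 j :
  j \in r -> P j -> \big[Num.min/x0]_(i <- r | P i) F i <= F j.
Proof.
elim: r => // k r IH; rewrite in_cons big_cons => /orP [/eqP <-|jr] Pj.
  by rewrite Pj ge_min lexx.
case: (P k); last exact: IH.
by rewrite ge_min (IH jr Pj) orbT.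
Qed.

Local Close Scope classical_set_scope.
Local Open Scope ring_scope.
Section GM.
Variables (R : realType) (a b : R) (n : nat) (p : {set 'I_n} -> R).
Hypothesis hp : monotonic_family a b p.

Definition inn (t : 'I_n -> R) (S : {set 'I_n}) := \big[Num.max/p S]_(j in S) t j.
Definition Fg (t : 'I_n -> R) := \big[Num.min/b]_(S : {set 'I_n}) inn t S.

Lemma innLBp (t : 'I_n -> R) (S : {set 'I_n}) : p S <= inn t S.
Proof. rewrite /inn; elim/big_rec: _ => [|j v _ h]; first exact: lexx. by rewrite le_max h orbT. Qed.

Lemma innLBj (t : 'I_n -> R) (S : {set 'I_n}) j : j \in S -> t j <= inn t S.
Proof. by move=> jS; rewrite /inn; apply: bigmax_ge_seq => //; exact: mem_index_enum. Qed.

Lemma innUB (t : 'I_n -> R) (S : {set 'I_n}) x : p S <= x -> (forall j, j \in S -> t j <= x) -> inn t S <= x.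
Proof. move=> hS hj; rewrite /inn; elim/big_rec: _ => [|j v jS h] //. by rewrite ge_max h hj. Qed.

Lemma FLB (t : 'I_n -> R) x : x <= b -> (forall S, x <= inn t S) -> x <= Fg t.
Proof. move=> xb hS; rewrite /Fg; elim/big_rec: _ => [|S v _ h] //. by rewrite le_min h hS. Qed.

Lemma FUB (t : 'I_n -> R) (S : {set 'I_n}) : Fg t <= inn t S.
Proof. by rewrite /Fg; apply: bigmin_le_seq => //; exact: mem_index_enum. Qed.

Definition Lg (i : 'I_n) := p ([set: 'I_n] :\ i).
Definition Hg (i : 'I_n) := p [set i].

Lemma pX (S : {set 'I_n}) : a <= p S <= b. Proof. by case: hp => h _; apply: h. Qed.
Lemma pT : p [set: 'I_n] = a. Proof. by case: hp => _ []. Qed.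
Lemma p0 : p finset.set0 = b. Proof. by case: hp => _ [_ []]. Qed.
Lemma pmono (Q T : {set 'I_n}) : T \subset Q -> p Q <= p T. Proof. by case: hp => _ [_ [_ h]]; apply: h. Qed.

Lemma gLHr i : (a <= Lg i <= b) /\ (a <= Hg i <= b).
Proof. by split; apply: pX. Qed.

Lemma gLB1 i x (t : 'I_n -> R) : x <= Hg i -> (forall j, j != i -> x <= t j) -> x <= Fg t.
Proof.
move=> xH ht; apply: FLB.
  by apply: le_trans xH _; case/andP: (pX [set i]).
move=> S; case: (boolP (S \subset [set i])) => hS.
  by apply: le_trans (innLBp t S); apply: le_trans xH (pmono hS).
move/subsetPn: hS => [j jS]; rewrite finset.in_set1 => ji.
exact: le_trans (ht j ji) (innLBj t jS).
Qed.

Lemma gLB2 x (t : 'I_n -> R) : x <= b -> (forall j, x <= t j) -> x <= Fg t.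
Proof.
move=> xb ht; apply: FLB => // S.
have [->|/set0Pn [j jS]] := eqVneq S finset.set0.
  by apply: le_trans (innLBp t _); rewrite p0.
exact: le_trans (ht j) (innLBj t jS).
Qed.

Lemma gLB3 i x (t : 'I_n -> R) : x <= Lg i -> x <= t i -> x <= Fg t.
Proof.
move=> xL xt; apply: FLB.
  by apply: le_trans xL _; case/andP: (pX ([set: 'I_n] :\ i)).
move=> S; case: (boolP (i \in S)) => iS.
  exact: le_trans xt (innLBj t iS).
apply: le_trans (innLBp t S); apply: le_trans xL (pmono _).
apply/fintype.subsetP => j jS; rewrite finset.in_setD1 finset.in_setT andbT.
by apply/eqP => ji; move: iS; rewrite -ji jS.
Qed.

Lemma gUB1 x (t : 'I_n -> R) : a <= x -> (forall j, t j <= x) -> Fg t <= x.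
Proof. by move=> ax ht; apply: le_trans (FUB t [set: 'I_n]) _; apply: innUB => //; rewrite pT. Qed.

Lemma gUB2 i x (t : 'I_n -> R) : Lg i <= x -> (forall j, j != i -> t j <= x) -> Fg t <= x.
Proof.
move=> Lx ht; apply: le_trans (FUB t ([set: 'I_n] :\ i)) _; apply: innUB => // j.
by rewrite finset.in_setD1 => /andP [ji _]; apply: ht.
Qed.

Lemma gUB3 i x (t : 'I_n -> R) : Hg i <= x -> t i <= x -> Fg t <= x.
Proof.
move=> Hx ht; apply: le_trans (FUB t [set i]) _; apply: innUB => // j.
by rewrite finset.in_set1 => /eqP ->.
Qed.

End GM.

Lemma sortedA (R : realType) (s : seq R) k (x : R) : sorted <=%R s ->
  (k < count (fun y : R => (y <= x)%R) s)%N -> nth 0 s k <= x.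
Proof.
elim: s k => [|y s IH] k //= hs hc.
have hs' : sorted <=%R s := path_sorted hs.
have hall : all (fun z => y <= z) s := order_path_min le_trans hs.
case: (leP y x) => yx.
  case: k hc => [|k] hc //=; apply: IH hs' _.
  by move: hc; rewrite yx add1n ltnS.
have h0 : ~~ has (fun z => z <= x) s.
  apply/hasPn => z zs; rewrite -ltNge; exact: lt_le_trans yx (allP hall z zs).
move: hc; rewrite has_count -leqNgt leqn0 in h0; rewrite (eqP h0).
by have -> : (y <= x) = false by apply/negbTE; rewrite -ltNge.
Qed.

Lemma sortedB (R : realType) (s : seq R) k (x : R) : sorted <=%R s -> (k < size s)%N ->
  (size s - k <= count (fun y : R => (x <= y)%R) s)%N -> x <= nth 0 s k.
Proof.
elim: s k => [|y s IH] k //= hs hk hc.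
have hs' : sorted <=%R s := path_sorted hs.
have hall : all (fun z => y <= z) s := order_path_min le_trans hs.
case: k hk hc => [|k] hk hc /=.
  have := count_size (fun z => x <= z) s.
  by move: hc; case: (x <= y) => //= hc h; lia.
case: (leP x y) => xy.
  apply: le_trans xy _; apply: (allP hall); apply: mem_nth; by rewrite -ltnS.
have hk' : (k < size s)%N by rewrite -ltnS.
apply: (IH k hs' hk').
by move: hc; have -> : (x <= y) = false by apply/negbTE; rewrite -ltNge.
Qed.

Section Med.
Variables (R : realType) (a b : R) (n : nat) (alpha : nat -> R).
Hypothesis n2 : (2 <= n)%N.
Hypothesis ar : forall k, (1 <= k <= n.-1)%N -> a <= alpha k <= b.
Hypothesis am : forall k l, (1 <= k)%N -> (k <= l)%N -> (l <= n.-1)%N -> alpha k <= alpha l.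

Definition ms (t : 'I_n -> R) := [seq t i | i <- enum 'I_n] ++ [seq alpha k | k <- iota 1 n.-1].
Definition Fm (t : 'I_n -> R) := med (ms t).

Lemma size_ms t : size (ms t) = (n + n.-1)%N.
Proof. by rewrite size_cat !size_map size_iota -enumT size_enum_ord. Qed.

Lemma half_ms : ((n + n.-1)./2 = n.-1)%N.
Proof.
case: n n2 => [|n'] // _.
by rewrite -[n'.+1.-1]/n' -[(n'.+1 + n')%N]/(n' + n')%N.+1 addnn /= uphalf_double.
Qed.

Lemma medUB t x : (n <= count (fun y => (y <= x)%R) (ms t))%N -> Fm t <= x.
Proof.
move=> hc; rewrite /Fm /med; apply: sortedA; first by apply: sort_sorted => u v; exact: le_total.
have hp : perm_eq (sort <=%R (ms t)) (ms t) by rewrite perm_sort.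
rewrite (permP hp) size_ms half_ms.
by apply: leq_trans hc; case: n n2.
Qed.

Lemma medLB t x : (n <= count (fun y => (x <= y)%R) (ms t))%N -> x <= Fm t.
Proof.
move=> hc; rewrite /Fm /med; apply: sortedB; first by apply: sort_sorted => u v; exact: le_total.
  by rewrite size_sort size_ms half_ms; move: n2; lia.
have hp : perm_eq (sort <=%R (ms t)) (ms t) by rewrite perm_sort.
rewrite (permP hp) size_sort size_ms half_ms.
by apply: leq_trans hc; move: n2; lia.
Qed.

Lemma cnt_all (P : pred R) (t : 'I_n -> R) : (forall j, P (t j)) ->
  count P [seq t i | i <- enum 'I_n] = n.
Proof.
move=> h; rewrite count_map (@eq_count _ _ predT) ?count_predT ?size_enum_ord //.
Qed.

Lemma cnt_one (P : pred R) (t : 'I_n -> R) i : P (t i) ->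
  (1 <= count P [seq t i | i <- enum 'I_n])%N.
Proof.
move=> h; rewrite -has_count; apply/hasP; exists (t i) => //.
by apply: map_f; rewrite mem_enum.
Qed.

Lemma cnt_oth (P : pred R) (t : 'I_n -> R) i : (forall j, j != i -> P (t j)) ->
  (n.-1 <= count P [seq t i | i <- enum 'I_n])%N.
Proof.
move=> h; rewrite count_map.
have := count_predC (pred1 i) (enum 'I_n).
rewrite size_enum_ord (count_uniq_mem _ (enum_uniq _)) mem_enum /= => e.
have : (count (predC (pred1 i)) (enum 'I_n) <= count (preim t P) (enum 'I_n))%N.
  by apply: sub_count => j /= ji; apply: h.
move=> h2; apply: (leq_trans _ h2); rewrite -{1}e add1n /=; exact: leqnn.
Qed.

Lemma cnt_aall (P : pred R) : (forall k, (1 <= k <= n.-1)%N -> P (alpha k)) ->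
  count P [seq alpha k | k <- iota 1 n.-1] = n.-1.
Proof.
move=> h; rewrite count_map (@eq_in_count _ _ predT) ?count_predT ?size_iota //.
move=> k; rewrite mem_iota => /andP [k1 kn] /=; rewrite h // k1 /=.
by move: kn; case: n n2 => // n' _; rewrite add1n ltnS.
Qed.

Lemma cnt_aone (P : pred R) k : (1 <= k <= n.-1)%N -> P (alpha k) ->
  (1 <= count P [seq alpha k | k <- iota 1 n.-1])%N.
Proof.
move=> hk h; rewrite -has_count; apply/hasP; exists (alpha k) => //.
apply: map_f; rewrite mem_iota; case/andP: hk => -> /=.
by case: n n2 => // n' _; rewrite add1n ltnS.
Qed.

Lemma k1 : (1 <= 1 <= n.-1)%N. Proof. by case: n n2 => // [[|n']]. Qed.
Lemma kn : (1 <= n.-1 <= n.-1)%N. Proof. by rewrite leqnn andbT; case: n n2 => // [[|n']]. Qed.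

Definition Lm (i : 'I_n) := alpha 1.
Definition Hm (i : 'I_n) := alpha n.-1.

Lemma mLHr i : (a <= Lm i <= b) /\ (a <= Hm i <= b).
Proof. by split; apply: ar; [exact: k1 | exact: kn]. Qed.

Lemma mLB1 i x (t : 'I_n -> R) : x <= Hm i -> (forall j, j != i -> x <= t j) -> x <= Fm t.
Proof.
move=> xH ht; apply: medLB; rewrite count_cat.
have h1 := cnt_oth (P := fun y => x <= y) ht.
have h2 := cnt_aone (P := fun y => x <= y) kn xH.
apply: leq_trans (leq_add h1 h2); move: n2; lia.
Qed.

Lemma mLB2 x (t : 'I_n -> R) : x <= b -> (forall j, x <= t j) -> x <= Fm t.
Proof.
move=> _ ht; apply: medLB; rewrite count_cat.
by rewrite (cnt_all (P := fun y => x <= y) ht) leq_addr.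
Qed.

Lemma mLB3 i x (t : 'I_n -> R) : x <= Lm i -> x <= t i -> x <= Fm t.
Proof.
move=> xL xt; apply: medLB; rewrite count_cat.
have h1 := cnt_one (P := fun y => x <= y) xt.
have h2 : (n.-1 <= count (fun y => (x <= y)%R) [seq alpha k | k <- iota 1 n.-1])%N.
  rewrite cnt_aall //.
  move=> k hk /=; apply: le_trans xL _; apply: am => //; first exact: (andP hk).1.
  exact: (andP hk).2.
apply: leq_trans (leq_add h1 h2); move: n2; lia.
Qed.

Lemma mUB1 x (t : 'I_n -> R) : a <= x -> (forall j, t j <= x) -> Fm t <= x.
Proof.
move=> _ ht; apply: medUB; rewrite count_cat.
by rewrite (cnt_all (P := fun y => y <= x) ht) leq_addr.
Qed.

Lemma mUB2 i x (t : 'I_n -> R) : Lm i <= x -> (forall j, j != i -> t j <= x) -> Fm t <= x.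
Proof.
move=> Lx ht; apply: medUB; rewrite count_cat.
have h1 := cnt_oth (P := fun y => y <= x) ht.
have h2 := cnt_aone (P := fun y => y <= x) k1 Lx.
apply: leq_trans (leq_add h1 h2); move: n2; lia.
Qed.

Lemma mUB3 i x (t : 'I_n -> R) : Hm i <= x -> t i <= x -> Fm t <= x.
Proof.
move=> Hx xt; apply: medUB; rewrite count_cat.
have h1 := cnt_one (P := fun y => y <= x) xt.
have h2 : (n.-1 <= count (fun y => (y <= x)%R) [seq alpha k | k <- iota 1 n.-1])%N.
  rewrite cnt_aall //.
  move=> k hk /=; apply: le_trans Hx; apply: am => //; first exact: (andP hk).1.
  exact: (andP hk).2.
apply: leq_trans (leq_add h1 h2); move: n2; lia.
Qed.

End Med.

Ltac closeM := first [ by apply: mLHr | by apply: mLB1 | by apply: mLB2 | by apply: mLB3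
  | by apply: mUB1 | by apply: mUB2 | by apply: mUB3 | by [] ].
Ltac closeG hp := first [ by apply: gUB2 | by apply: gUB3 | by apply: gLB1 | by apply: gLB3 | by apply: (gLHr hp) | by apply: (gLB1 hp) | by apply: (gLB2 hp) | by apply: (gLB3 hp)
  | by apply: (gUB1 hp) | by apply: (gUB2 hp) | by apply: (gUB3 hp) | by [] ].

Theorem theorem5 (R : realType) (a b : R) (n : nat) :
  a < b -> (2 <= n)%N ->
  (forall alpha : nat -> R,
      (forall k, (1 <= k <= n.-1)%N -> a <= alpha k <= b) ->
      (forall k l, (1 <= k)%N -> (k <= l)%N -> (l <= n.-1)%N -> alpha k <= alpha l) ->
      (NOM a b (@median_voter_scheme R a b n alpha) <->
         alpha 1%N = a /\ alpha n.-1 = b)) /\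
  (forall p : {set 'I_n} -> R,
      monotonic_family a b p ->
      ~ dictatorial a b (gen_median_voter_scheme a b p) ->
      (NOM a b (gen_median_voter_scheme a b p) <->
         forall i : 'I_n, p (finset.setTfor 'I_n :\ i) = a /\ p [set i] = b)).
Proof.
move=> ab n2; split.
- move=> alpha ar am.
  have -> : @median_voter_scheme R a b n alpha = fF a b (Fm alpha) by [].
  split.
  + move=> nom.
    have hd : forall i : 'I_n, (Lm alpha i = a /\ Hm alpha i = b) \/ (Lm alpha i = b /\ Hm alpha i = a).
      by apply: (hard (F := Fm alpha) (L := Lm alpha) (H := Hm alpha) ab); closeM.
    have i0 : 'I_n := Ordinal (ltnW n2).
    case: (hd i0); rewrite /Lm /Hm => -[h1 h2] //.
    have : alpha 1%N <= alpha n.-1 by apply: am => //; move: n2; lia.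
    rewrite h1 h2; lra.
  + move=> [h1 h2].
    apply: (easy (F := Fm alpha) (L := Lm alpha) (H := Hm alpha) ab); try closeM.
    all: try by move=> i; rewrite /Lm /Hm; split.
- move=> p hp nd.
  have E : gen_median_voter_scheme a b p = fF a b (Fg b p) by [].
  rewrite E; rewrite E in nd.
  split.
  + move=> nom i.
    have hd : forall i : 'I_n, (Lg p i = a /\ Hg p i = b) \/ (Lg p i = b /\ Hg p i = a).
      by apply: (hard (F := Fg b p) (L := Lg p) (H := Hg p) ab); closeG hp.
    case: (hd i); rewrite /Lg /Hg => -[h1 h2] //.
    exfalso; apply: nd.
    by apply: (dict_of (F := Fg b p) (L := Lg p) (H := Hg p) _ _ h1 h2); try closeG hp.
  + move=> h.
    apply: (easy (F := Fg b p) (L := Lg p) (H := Hg p) ab); try closeG hp.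
    all: try by move=> i; rewrite /Lg /Hg; apply: h.
Qed.
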